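(* Let $X$ be a Banach space and $C>0$. The following assertions are equivalent. (1) For every Banach space $Y$ and every bounded linear operator $T\colon X\to Y$, $\omega(T^* )\leq C\cdot\operatorname{uc}(T)$. (2) For every bounded set $K\subset X^*$, $\omega(K)\leq C\cdot\eta(K)$.
   Context: Scalars may be real or complex. For a bounded sequence $(y_n)$ in a Banach space, $\operatorname{ca}((y_n))=\inf_{n\in\mathbb N}\sup\{\|y_k-y_l\|: k,l\geq n\}$. For a bounded linear operator $T\colon X\to Y$, $$\operatorname{uc}(T)=\sup\Big\{\operatorname{ca}\Big(\big(\textstyle\sum_{i=1}^n Tx_i\big)_n\Big):\ (x_n)\subset X,\ \sup_{x^*\in B_{X^*}}\sum_{n=1}^\infty|x^*(x_n)|\leq 1\Big\}.$$ For a bounded subset $A$ of a Banach space $E$, the de Blasi measure is $\omega(A)=\inf\{\sup_{a\in A}\operatorname{dist}(a,K): \emptyset\neq K\subset E \text{ weakly compact}\}$. For $T^*\colon Y^*\to X^*$, $\omega(T^* )=\omega(T^*(B_{Y^*}))$ computed in $X^*$. For a bounded $K\subset X^*$, $$\eta(K)=\sup\Big\{\limsup_n\sup_{x^*\in K}|x^*(x_n)|:\ (x_n)\subset X,\ \sup_{x^*\in B_{X^*}}\sum_{n=1}^\infty|x^*(x_n)|\leq 1\Big\},$$ and $\omega(K)$ is computed in $X^*$. *)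

(* Defs.v *)
From HB Require Import structures.
From mathcomp Require Import all_boot all_algebra.
From mathcomp Require Import all_classical all_reals all_analysis.
From mathcomp.real_closed Require Export complex.
Export Num.Theory GRing.Theory.
Export numFieldNormedType.Exports.

Set Implicit Arguments.
Unset Strict Implicit.
Unset Printing Implicit Defensive.

Local Open Scope classical_set_scope.
Local Open Scope ring_scope.

(* Scalars: K is the scalar field (R itself for real scalars, R[i] for complex
   scalars).  Norms and absolute values in K are real numbers lying in K;
   rv : K -> R reads such a real element of K as an element of R
   (rv = id for K = R, rv = complex.Re for K = R[i]). *)
Section Measures.
Context (R : realType) (K : numFieldType) (rv : K -> R).

Section Dual.
Context (X : normedModType K).

Definition dual_elt (f : X -> K) : Prop :=
  (forall (a : K) (x y : X), f (a *: x + y) = a * f x + f y) /\ continuous f.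

Definition dnorm (f : X -> K) : R :=
  sup [set rv `|f x| | x in [set x : X | `|x| <= 1]].

Definition dual_ball : set (X -> K) :=
  [set f | dual_elt f /\ dnorm f <= 1].

Definition dual_bounded (A : set (X -> K)) : Prop :=
  A `<=` dual_elt /\ exists M : R, forall f, A f -> dnorm f <= M.

Definition bidual_elt (phi : (X -> K) -> K) : Prop :=
  (forall (a : K) (f g : X -> K), dual_elt f -> dual_elt g ->
      phi (fun x => a * f x + g x) = a * phi f + phi g) /\
  exists M : R, forall f, dual_elt f -> rv `|phi f| <= M * dnorm f.

(* W is a weakly compact subset of X', i.e. compact for sigma(X', X''):
   every proper filter containing W has a cluster point in W for the weak
   topology (whose basic neighbourhoods of a are given by finitely many
   elements of X'' and an epsilon). *)
Definition weakly_compact (W : set (X -> K)) : Prop :=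
  W `<=` dual_elt /\
  forall F : set_system (X -> K), ProperFilter F -> F W ->
    exists2 a, W a &
      forall (phis : seq ((X -> K) -> K)) (eps : R), 0 < eps ->
        (forall phi, phi \in phis -> bidual_elt phi) ->
        forall S, F S ->
          exists g, [/\ S g, W g &
            forall phi, phi \in phis -> rv `|phi g - phi a| < eps].

Definition dual_dist (a : X -> K) (W : set (X -> K)) : \bar R :=
  ereal_inf [set (dnorm (fun x => a x - k x))%:E | k in W].

Definition omega (A : set (X -> K)) : \bar R :=
  ereal_inf [set ereal_sup [set dual_dist a W | a in A]
            | W in [set W | W !=set0 /\ weakly_compact W]].

Definition wuc1 (x : nat -> X) : Prop :=
  (ereal_sup [set (\sum_(0 <= n <oo) ((rv `|f (x n)|)%:E))%E
             | f in dual_ball] <= 1%:E)%E.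

Definition eta (W : set (X -> K)) : \bar R :=
  ereal_sup [set limn_esup (fun n => ereal_sup [set (rv `|f (x n)|)%:E | f in W])
            | x in wuc1].

End Dual.

Definition ca (Y : normedModType K) (y : nat -> Y) : \bar R :=
  ereal_inf [set ereal_sup [set (rv `|y kl.1 - y kl.2|)%:E
                           | kl in [set kl : nat * nat | (n <= kl.1)%N /\ (n <= kl.2)%N]]
            | n in [set: nat]].

(* uc(T); the n-th partial sum sum_{i=1}^n T x_i is \sum_(i < n.+1) T (x i)
   with 0-based indexing of the sequence *)
Definition uc (X Y : normedModType K) (T : X -> Y) : \bar R :=
  ereal_sup [set ca (fun n => \sum_(i < n.+1) T (x i)) | x in @wuc1 X].

Definition adj_ball (X Y : normedModType K) (T : X -> Y) : set (X -> K) :=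
  [set (fun x => g (T x)) | g in @dual_ball Y].

Definition omega_adj (X Y : normedModType K) (T : X -> Y) : \bar R :=
  omega (adj_ball T).

Definition prop3p4_equiv (X : completeNormedModType K) (C : R) : Prop :=
  (forall (Y : completeNormedModType K) (T : {linear X -> Y}),
      continuous T -> (omega_adj T <= C%:E * uc T)%E)
  <->
  (forall W : set (X -> K), dual_bounded W -> (omega W <= C%:E * eta W)%E).

End Measures.

(* Main.v *)
Require Import Defs.
From HB Require Import structures.
From mathcomp Require Import all_boot all_order all_algebra.
From mathcomp Require Import all_classical all_reals all_analysis.
From mathcomp.real_closed Require Import complex.
From mathcomp Require Import ring lra.
Import Order.TTheory GRing.Theory Num.Theory.
Local Open Scope classical_set_scope.
Local Open Scope ring_scope.
Set Implicit Arguments.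
Unset Strict Implicit.
Unset Printing Implicit Defensive.
Section Generic.
Context (R : realType) (K : numFieldType) (rv : K -> R) (emb : {rmorphism R -> K}).
Hypothesis lee_emb : forall r s : R, (emb r <= emb s) = (r <= s).
Hypothesis rvK : forall r : R, rv (emb r) = r.
Hypothesis embK : forall k : K, 0 <= k -> emb (rv k) = k.

Lemma emb_ge0 (r : R) : (0 <= emb r) = (0 <= r).
Proof. by rewrite -(rmorph0 emb) lee_emb. Qed.

Lemma norm_emb (r : R) : `|emb r| = emb `|r|.
Proof.
have [r0|r0] := leP 0 r.
  by rewrite !ger0_norm // emb_ge0.
have e0 : emb r < 0.
  by rewrite -oppr_gt0 -rmorphN lt0r emb_ge0 fmorph_eq0 oppr_eq0 oppr_ge0 ltW // lt_eqF.
by rewrite !ltr0_norm // rmorphN.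
Qed.

Lemma rv_le (x y : K) : 0 <= x -> x <= y -> rv x <= rv y.
Proof.
move=> x0 xy; have y0 := le_trans x0 xy.
by rewrite -lee_emb !embK.
Qed.

Lemma rv_ge0 (x : K) : 0 <= x -> 0 <= rv x.
Proof. by move=> x0; rewrite -emb_ge0 embK. Qed.

Lemma rvD (x y : K) : 0 <= x -> 0 <= y -> rv (x + y) = rv x + rv y.
Proof.
by move=> x0 y0; rewrite -{1}(embK x0) -{1}(embK y0) -rmorphD rvK.
Qed.

Lemma rvM (x y : K) : 0 <= x -> 0 <= y -> rv (x * y) = rv x * rv y.
Proof.
by move=> x0 y0; rewrite -{1}(embK x0) -{1}(embK y0) -rmorphM rvK.
Qed.

Lemma rv0 : rv 0 = 0.
Proof. by rewrite -(rmorph0 emb) rvK. Qed.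

Lemma rv1 : rv 1 = 1.
Proof. by rewrite -(rmorph1 emb) rvK. Qed.

Lemma rvV (x : K) : 0 <= x -> rv x^-1 = (rv x)^-1.
Proof.
move=> x0; rewrite -{1}(embK x0) -fmorphV rvK //.
Qed.

Definition nv (V : normedModType K) (x : V) : R := rv `|x|.

Lemma nv_ge0 (V : normedModType K) (x : V) : 0 <= nv x.
Proof. exact: rv_ge0. Qed.

Lemma nvD (V : normedModType K) (x y : V) : nv (x + y) <= nv x + nv y.
Proof. by rewrite /nv -rvD // rv_le // ler_normD. Qed.

Lemma nvN (V : normedModType K) (x : V) : nv (- x) = nv x.
Proof. by rewrite /nv normrN. Qed.

Lemma nvB (V : normedModType K) (x y : V) : nv (x - y) = nv (y - x).
Proof. by rewrite /nv distrC. Qed.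

Lemma nvZ (V : normedModType K) (a : K) (x : V) : nv (a *: x) = rv `|a| * nv x.
Proof. by rewrite /nv normrZ rvM. Qed.

Lemma nv0 (V : normedModType K) : nv (0 : V) = 0.
Proof. by rewrite /nv normr0 rv0. Qed.

Lemma nv_eq0 (V : normedModType K) (x : V) : nv x = 0 -> x = 0.
Proof. by move=> h; apply/normr0_eq0; rewrite -(embK (normr_ge0 x)); move: h; rewrite /nv => ->; rewrite rmorph0. Qed.

Lemma nv_le1 (V : normedModType K) (x : V) : (nv x <= 1) = (`|x| <= 1).
Proof. by rewrite /nv -lee_emb embK // rmorph1. Qed.

Lemma nvK (V : normedModType K) (x : V) : emb (nv x) = `|x|.
Proof. by rewrite embK. Qed.


Lemma lin_bound (V W : normedModType K) (T : V -> W) :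
  (forall a x y, T (a *: x + y) = a *: T x + T y) -> {for 0, continuous T} ->
  exists2 M : R, 0 <= M & forall x, nv (T x) <= M * nv x.
Proof.
move=> lin cT.
have T0 : T 0 = 0.
  by have := lin 1 0 0; rewrite scaler0 addr0 scale1r -{1}[T 0]addr0 => /addrI <-.
have TZ a x : T (a *: x) = a *: T x by rewrite -[a *: x]addr0 lin T0 addr0.
have := cT; move/cvgrPdist_lt => /(_ 1 ltr01); rewrite T0 => /nbhs_norm0P [d d0 Hd].
exists (rv (2 / d)); first by apply: rv_ge0; rewrite divr_ge0 // ltW.
move=> x; have [->|x0] := eqVneq x 0; first by rewrite T0 !nv0 mulr0.
have nx0 : 0 < `|x| by rewrite normr_gt0.
set c := d / (2 * `|x|).
have c0 : 0 < c by rewrite divr_gt0 // mulr_gt0.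
have : `|c *: x| < d.
  rewrite normrZ gtr0_norm // /c invfM.
  have -> : d * (2^-1 * `|x|^-1) * `|x| = d / 2.
    by rewrite -!mulrA mulVf ?gt_eqF // mulr1.
  by rewrite gtr_pMr // invf_lt1 // ltr1n.
move/Hd; rewrite /= sub0r normrN TZ normrZ gtr0_norm // => h.
have hx : `|T x| < 2 / d * `|x|.
  have : `|T x| < c^-1 by rewrite -(ltr_pM2l c0) mulfV ?gt_eqF.
  by rewrite /c invf_div mulrAC.
have dg : 0 <= 2 / d by rewrite divr_ge0 // ltW.
rewrite /nv -rvM //; apply: rv_le => //; exact: ltW.
Qed.

Section DualFacts.
Context (X : normedModType K).

Lemma dual_linK (f : X -> K) : dual_elt f ->
  forall a x y, f (a *: x + y) = a *: (f x : K) + f y.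
Proof. by case=> lin _ a x y; rewrite lin. Qed.

Lemma dual0 (f : X -> K) : dual_elt f -> f 0 = 0.
Proof.
case=> lin _.
by have := lin 1 0 0; rewrite scaler0 addr0 mul1r -{1}[f 0]addr0 => /addrI <-.
Qed.

Lemma dualZ (f : X -> K) a x : dual_elt f -> f (a *: x) = a * f x.
Proof. by move=> df; rewrite -[a *: x]addr0 df.1 dual0 // addr0. Qed.

Lemma dualD (f : X -> K) x y : dual_elt f -> f (x + y) = f x + f y.
Proof. by move=> df; rewrite -[x in LHS]scale1r df.1 mul1r. Qed.

Lemma dualN (f : X -> K) x : dual_elt f -> f (- x) = - f x.
Proof. by move=> df; rewrite -scaleN1r dualZ // mulN1r. Qed.

Lemma dualB (f : X -> K) x y : dual_elt f -> f (x - y) = f x - f y.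
Proof. by move=> df; rewrite dualD // dualN. Qed.

Lemma dual_bnd (f : X -> K) : dual_elt f ->
  exists2 M : R, 0 <= M & forall x, rv `|f x| <= M * nv x.
Proof.
move=> df; have := @lin_bound X K f (dual_linK df) (df.2 0).
by case=> M M0 HM; exists M.
Qed.

Let dset (f : X -> K) := [set rv `|f x| | x in [set x : X | `|x| <= 1]].

Lemma dset_n0 (f : X -> K) : dset f !=set0.
Proof. by exists (rv `|f 0|), 0 => //=; rewrite normr0. Qed.

Lemma dset_ub (f : X -> K) : dual_elt f -> has_ubound (dset f).
Proof.
move=> /dual_bnd [M M0 HM]; exists M => _ [x /= x1 <-].
apply: (le_trans (HM x)); rewrite ler_piMr //.
by rewrite nv_le1.
Qed.

Lemma dnorm_ge0 (f : X -> K) : dual_elt f -> 0 <= dnorm rv f.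
Proof.
move=> df; have h : dset f (rv `|f 0|) by exists 0 => //=; rewrite normr0.
have := ub_le_sup (dset_ub df) h; apply: le_trans; exact: rv_ge0.
Qed.

Lemma dual_le (f : X -> K) x : dual_elt f -> rv `|f x| <= dnorm rv f * nv x.
Proof.
move=> df; have [->|x0] := eqVneq x 0.
  by rewrite dual0 // normr0 rv0 nv0 mulr0.
have nx0 : 0 < `|x| by rewrite normr_gt0.
have : dset f (rv `|f (`|x|^-1 *: x)|).
  by exists (`|x|^-1 *: x) => //=; rewrite normfZV.
move/(ub_le_sup (dset_ub df)).
rewrite dualZ // normrM rvM // normrV ?unitfE ?gt_eqF // rvV // -/(nv x).
have nvx0 : 0 < nv x.
  by rewrite lt_def nv_ge0 andbT; apply/eqP => /nv_eq0 /eqP; rewrite (negbTE x0).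
rewrite normr_id -/(nv x) mulrC ler_pdivrMr //; exact.
Qed.

Lemma dnorm_le (f : X -> K) (M : R) : dual_elt f -> 0 <= M ->
  (forall x, rv `|f x| <= M * nv x) -> dnorm rv f <= M.
Proof.
move=> df M0 HM; apply: ge_sup; first exact: dset_n0.
move=> _ [x /= x1 <-]; apply: (le_trans (HM x)); rewrite ler_piMr //.
by rewrite nv_le1.
Qed.

End DualFacts.

Lemma limn_esup_le_tail (u : nat -> \bar R) m :
  (limn_esup u <= ereal_sup (u @` [set n | (m <= n)%N]))%E.
Proof.
rewrite /limn_esup /limf_esup; apply: ereal_inf_lbound.
by exists [set n | (m <= n)%N] => //; exact: nbhs_infty_ge.
Qed.

Lemma limn_esup_ge (u : nat -> \bar R) (r : \bar R) :
  (forall n, (r <= u n)%E) -> (r <= limn_esup u)%E.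
Proof.
move=> ru; rewrite /limn_esup /limf_esup; apply/ereal_infP => _ [V FV <-].
have [N _ HN] := FV.
apply: le_trans (ru N) _; apply: ereal_sup_ubound.
exists N => //. apply: HN. rewrite /=. done.
Qed.

Section Dir21.
Context (X Y : normedModType K) (T : {linear X -> Y}) (cT : continuous T).

Lemma adj_elt (g : Y -> K) : dual_elt g -> dual_elt (fun x => g (T x)).
Proof.
move=> dg; split.
  by move=> a x y; rewrite linearP /= dualD // dualZ.
by move=> x; apply: (@continuous_comp _ _ _ T g); [exact: cT | exact: dg.2].
Qed.

Lemma adj_bounded : dual_bounded rv (adj_ball rv T).
Proof.
have [M M0 HM] := @lin_bound X Y T (fun a x y => linearP T a x y) (@cT 0).
split; first by move=> _ [g [dg _] <-]; exact: adj_elt.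
exists M => _ [g [dg g1] <-]; apply: dnorm_le => //; first exact: adj_elt.
move=> x; apply: le_trans (dual_le _ dg) _.
apply: le_trans (ler_wpM2r (nv_ge0 _) g1) _; rewrite mul1r; exact: HM.
Qed.

Lemma eta_adj_le : (Defs.eta rv (adj_ball rv T) <= uc rv T)%E.
Proof.
apply: ge_ereal_sup => _ [x wx <-].
apply: le_trans (ereal_sup_ubound (ex_intro2 _ _ x wx erefl)).
apply/ereal_infP => _ [m _ <-].
apply: le_trans (limn_esup_le_tail _ m.+1) _.
apply: ge_ereal_sup => _ [n mn <-]; rewrite /= in mn.
apply: ge_ereal_sup => _ [_ [g [dg g1] <-] <-].
apply: le_trans (ereal_sup_ubound _).
  2: { exists (n, n.-1); first by rewrite /=; split; [exact: ltnW | rewrite -ltnS prednK // (leq_trans _ mn)]. 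
       reflexivity. }
rewrite lee_fin /=.
have -> : \sum_(i < n.+1) T (x i) - \sum_(i < n.-1.+1) T (x i) = T (x n).
  by rewrite prednK ?(leq_trans _ mn) // big_ord_recr /= addrC addrK.
apply: le_trans (dual_le _ dg) _.
by rewrite -[X in _ <= X]mul1r ler_wpM2r // nv_ge0.
Qed.

End Dir21.

Lemma dir21 (X : normedModType K) (C : R) : 0 < C ->
  (forall W : set (X -> K), dual_bounded rv W -> (omega rv W <= C%:E * Defs.eta rv W)%E) ->
  forall (Y : normedModType K) (T : {linear X -> Y}), continuous T ->
    (omega_adj rv T <= C%:E * uc rv T)%E.
Proof.
move=> C0 h2 Y T cT; rewrite /omega_adj.
apply: le_trans (h2 _ (adj_bounded cT)) _.
by apply: lee_wpmul2l; [rewrite lee_fin ltW | exact: eta_adj_le].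
Qed.


Hypothesis Kcompl : forall F : set_system K, ProperFilter F -> cauchy F -> cvg F.

Record linf_ (I : Type) (i0 : I) :=
  Linf { lfun :> I -> K ; lbnd : exists M : R, forall i, nv (lfun i) <= M }.

Section Linf.
Context (I : Type) (i0 : I).
Local Notation linf := (@linf_ I i0).
Local Notation Linf := (@Linf I i0).

Lemma linf_eq (f g : linf) : lfun f = lfun g -> f = g.
Proof.
case: f g => f fb [g gb] /= fg; subst g; congr Linf; exact: Prop_irrelevance.
Qed.

HB.instance Definition _ := gen_eqMixin linf.
HB.instance Definition _ := gen_choiceMixin linf.

Lemma lzero_bnd : exists M : R, forall i : I, nv ((fun _ => 0 : K) i) <= M.
Proof. by exists 0 => i; rewrite nv0 ?rv0. Qed.
Definition lzero := Linf lzero_bnd.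

Lemma ladd_bnd (f g : linf) : exists M : R, forall i, nv (f i + g i) <= M.
Proof.
case: f g => f [M1 h1] [g [M2 h2]] /=; exists (M1 + M2) => i.
apply: le_trans (nvD (f i : K) (g i)) _; exact: lerD.
Qed.
Definition ladd f g := Linf (ladd_bnd f g).

Lemma lopp_bnd (f : linf) : exists M : R, forall i, nv (- f i) <= M.
Proof. by case: f => f [M h] /=; exists M => i; rewrite nvN. Qed.
Definition lopp f := Linf (lopp_bnd f).

Lemma lscale_bnd (a : K) (f : linf) : exists M : R, forall i, nv (a * f i) <= M.
Proof.
case: f => f [M h] /=; exists (rv `|a| * M) => i.
rewrite -[a * f i]/(a *: (f i : K^o)) nvZ //; apply: ler_wpM2l => //.
exact: rv_ge0.
Qed.
Definition lscale a f := Linf (lscale_bnd a f).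

Lemma laddA : associative ladd.
Proof. by move=> f g h; apply: linf_eq; apply/funext => i /=; rewrite addrA. Qed.
Lemma laddC : commutative ladd.
Proof. by move=> f g; apply: linf_eq; apply/funext => i /=; rewrite addrC. Qed.
Lemma ladd0 : left_id lzero ladd.
Proof. by move=> f; apply: linf_eq; apply/funext => i /=; rewrite add0r. Qed.
Lemma laddN : left_inverse lzero lopp ladd.
Proof. by move=> f; apply: linf_eq; apply/funext => i /=; rewrite addNr. Qed.

HB.instance Definition _ := GRing.isZmodule.Build linf laddA laddC ladd0 laddN.

Lemma lscaleA a b (f : linf) : lscale a (lscale b f) = lscale (a * b) f.
Proof. by apply: linf_eq; apply/funext => i /=; rewrite mulrA. Qed.
Lemma lscale1 : left_id 1 lscale.
Proof. by move=> f; apply: linf_eq; apply/funext => i /=; rewrite mul1r. Qed.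
Lemma lscaleDr : right_distributive lscale +%R.
Proof. by move=> a f g; apply: linf_eq; apply/funext => i /=; rewrite mulrDr. Qed.
Lemma lscaleDl f : {morph lscale^~ f : a b / a + b}.
Proof. by move=> a b; apply: linf_eq; apply/funext => i /=; rewrite mulrDl. Qed.

HB.instance Definition _ := GRing.Zmodule_isLmodule.Build K linf lscaleA lscale1 lscaleDr lscaleDl.


Definition lset (f : linf) := range (fun i => nv (f i)).

Lemma lset_n0 (f : linf) : lset f !=set0.
Proof. by exists (nv (f i0)), i0. Qed.

Lemma lset_ub (f : linf) : has_ubound (lset f).
Proof. by case: f => f [M h]; exists M => _ [i _ <-]; exact: h. Qed.

Definition lsup f := sup (lset f).

Lemma lsup_ub (f : linf) i : nv (f i) <= lsup f.
Proof. by apply: ub_le_sup (lset_ub f) _ _; exists i. Qed.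

Lemma lsup_le (f : linf) M : (forall i, nv (f i) <= M) -> lsup f <= M.
Proof. by move=> h; apply: ge_sup (lset_n0 f) _ => _ [i _ <-]; exact: h. Qed.

Lemma lsup_ge0 (f : linf) : 0 <= lsup f.
Proof. exact: le_trans (nv_ge0 _) (lsup_ub f i0). Qed.

Definition lnorm (f : linf) : K := emb (lsup f).

Lemma lnormD (f g : linf) : lnorm (f + g) <= lnorm f + lnorm g.
Proof.
rewrite /lnorm -rmorphD lee_emb; apply: lsup_le => i /=.
apply: le_trans (nvD (f i : K) (g i)) _; apply: lerD; exact: lsup_ub.
Qed.

Lemma lsupZ (a : K) (f : linf) : lsup (a *: f) = rv `|a| * lsup f.
Proof.
have a0 : 0 <= rv `|a| by exact: rv_ge0.
have nvM i : nv ((a *: f) i) = rv `|a| * nv (f i).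
  by rewrite /nv /= normrM rvM.
apply/eqP; rewrite eq_le; apply/andP; split.
  by apply: lsup_le => i; rewrite nvM ler_wpM2l // lsup_ub.
have [->|an0] := eqVneq (rv `|a|) 0; first by rewrite mul0r lsup_ge0.
have ap : 0 < rv `|a| by rewrite lt_def an0 a0.
rewrite mulrC -ler_pdivlMr //; apply: lsup_le => i.
by rewrite ler_pdivlMr // mulrC -nvM lsup_ub.
Qed.

Lemma lnormZ (a : K) (f : linf) : lnorm (a *: f) = `|a| * lnorm f.
Proof. by rewrite /lnorm lsupZ rmorphM embK. Qed.

Lemma lnorm0 (f : linf) : lnorm f = 0 -> f = 0.
Proof.
move=> /(congr1 rv); rewrite rvK rv0 => h.
apply: linf_eq; apply/funext => i /=.
apply: nv_eq0; apply/eqP; rewrite eq_le nv_ge0 andbT -h; exact: lsup_ub.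
Qed.

HB.instance Definition _ := Lmodule_isNormed.Build K linf lnormD lnormZ lnorm0.

Lemma linf_normE (f : linf) : `|f| = emb (lsup f).
Proof. by []. Qed.

Lemma linf_nvE (f : linf) : nv f = lsup f.
Proof. by rewrite /nv linf_normE rvK. Qed.


Lemma cauchy_pick (T : pseudoMetricType K) (F : set_system T) : ProperFilter F ->
  cauchy F -> forall e : K, 0 < e -> exists x, F (ball x e).
Proof.
move=> PF /cauchy_ballP cF e e0.
have [[A B] /= [FA FB] AB] := cF e e0.
have [x Ax] := filter_ex FA.
by exists x; apply: filterS FB => y By; exact: (AB (x, y)).
Qed.

Lemma linf_dist (f g : linf) i : `|f i - g i| <= `|f - g|.
Proof.
rewrite linf_normE -(embK (normr_ge0 (f i - g i))) lee_emb.
exact: (lsup_ub (f - g) i).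
Qed.

Lemma linf_complete (F : set_system linf) : ProperFilter F -> cauchy F -> cvg F.
Proof.
move=> PF cF.
have cFi i : cauchy ((fun f : linf => f i) @ F).
  apply: cauchy_exP => e e0.
  have [x Fx] := cauchy_pick PF cF e0.
  exists (x i); apply: (@filterS _ _ _ (ball x e)) Fx => y.
  rewrite -!ball_normE /ball_ /= => h; exact: le_lt_trans (linf_dist x y i) h.
pose l i := lim ((fun f : linf => f i) @ F).
have Fl i : (fun f : linf => f i) @ F --> l i by apply: Kcompl; exact: cFi.
have clo (c : K) (r : K) (i : I) : (\forall f \near F, `|c - lfun f i| <= r) -> `|c - l i| <= r.
  move=> h; apply/ler_addgt0Pr => d d0.
  have := Fl i; move/cvgrPdist_lt => /(_ d d0) hl.
  have [f /= [h1 h2]] := filter_ex (filterI h hl).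
  apply: le_trans (ler_distD (f i) _ _) _; apply: lerD => //.
  by rewrite distrC ltW.
have [x1 Fx1] := cauchy_pick PF cF ltr01.
have lb : exists M : R, forall i, nv (l i) <= M.
  exists (lsup x1 + 1) => i.
  have h : `|x1 i - l i| <= 1.
    apply: clo; apply: filterS Fx1 => f; rewrite -ball_normE /ball_ /= => hf.
    exact: ltW (le_lt_trans (linf_dist x1 f i) hf).
  rewrite -[l i](subKr (x1 i)); apply: le_trans (nvD _ _) _; apply: lerD.
    exact: lsup_ub.
  by rewrite ?nvN /nv ?normrN -rv1; apply: rv_le.
pose L := Linf lb.
apply/cvg_ex; exists L; apply/cvg_ballP => e e0.
have e20 : 0 < e / 2 by rewrite divr_gt0.
have e40 : 0 < e / 2 / 2 by rewrite divr_gt0.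
have [x Fx] := cauchy_pick PF cF e40.
have Fx' := Fx.
apply: filterS Fx' => y; rewrite -!ball_normE /ball_ /= => hy.
have hi i : `|y i - L i| <= e / 2.
  apply: clo; apply: filterS Fx => f; rewrite -ball_normE /ball_ /= => hf.
  apply: le_trans (ler_distD (x i) _ _) _.
  rewrite [e / 2]splitr; apply: lerD; apply: ltW.
    by rewrite distrC; exact: le_lt_trans (linf_dist x y i) hy.
  exact: le_lt_trans (linf_dist x f i) hf.
have hs : lsup (L - y) <= rv (e / 2).
  apply: lsup_le => i /=; rewrite /nv distrC; apply: rv_le => //; exact: hi.
rewrite linf_normE; apply: (@le_lt_trans _ _ (e / 2)).
  by rewrite -(embK (ltW e20)) lee_emb.
by rewrite gtr_pMr // invf_lt1 // ltr1n.
Qed.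

HB.instance Definition _ := Uniform_isComplete.Build linf linf_complete.



End Linf.

Lemma ltr_emb (r s : R) : (emb r < emb s) = (r < s).
Proof. by rewrite !lt_def lee_emb (inj_eq (fmorph_inj emb)). Qed.

Lemma nv_lt (V : normedModType K) (x : V) (e : K) : 0 < e ->
  (`|x| < e) = (nv x < rv e).
Proof. by move=> e0; rewrite -ltr_emb nvK embK // ltW. Qed.

Lemma lip_cont (V Z : normedModType K) (f : V -> Z) (M : R) :
  (forall x y, nv (f x - f y) <= M * nv (x - y)) -> continuous f.
Proof.
move=> h x; apply/cvgrPdist_lt => e e0.
have M1 : 0 < `|M| + 1 by rewrite ltr_pwDr.
have re0 : 0 < rv e by rewrite -ltr_emb embK ?ltW // rmorph0.
have d0 : 0 < emb (rv e / (`|M| + 1)) by rewrite -(rmorph0 emb) ltr_emb divr_gt0.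
apply/nbhs_normP; exists (emb (rv e / (`|M| + 1))) => //= y /=.
rewrite nv_lt // rvK => hy.
rewrite nv_lt //; apply: le_lt_trans (h x y) _.
apply: le_lt_trans (_ : M * nv (x - y) <= (`|M| + 1) * nv (x - y)) _.
  by apply: ler_wpM2r; [exact: nv_ge0 | apply: le_trans (ler_norm M) _; rewrite lerDl].
by rewrite mulrC -ltr_pdivlMr.
Qed.

Lemma lee_real (a b : \bar R) :
  (forall r : R, (r%:E < a)%E -> (r%:E <= b)%E) -> (a <= b)%E.
Proof.
case: a => [a| |] h; last exact: leNye.
- case: b h => [b| |] h; last 2 first.
  + exact: leey.
  + by have := h (a - 1); rewrite lte_fin ltrBlDr ltrDl ltr01 => /(_ isT).
  rewrite lee_fin; apply/ler_addgt0Pr => e e0.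
  have := h (a - e); rewrite lte_fin ltrBlDr ltrDl e0 lee_fin => /(_ isT).
  by rewrite lerBlDr.
- case: b h => [b| |] h; last 2 first.
  + exact: leey.
  + by have := h 0; rewrite ltey => /(_ isT).
  by have := h (b + 1); rewrite ltey lee_fin gerDl ler10 => /(_ isT).
Qed.

Section OmegaFacts.
Context (X : normedModType K).

Lemma omega_mono (A B : set (X -> K)) : A `<=` B -> (omega rv A <= omega rv B)%E.
Proof.
move=> AB; apply/ereal_infP => _ [V hV <-].
apply: le_trans (ereal_inf_lbound (ex_intro2 _ _ V hV erefl)) _.
apply: ereal_sup_le => _ [a Aa <-]; exists a => //; exact: AB.
Qed.

Lemma zero_dual : dual_elt (fun _ : X => 0 : K).
Proof. by split; [move=> a x y; rewrite mulr0 addr0 | move=> x; exact: cst_continuous]. Qed.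

Lemma wc_zero : weakly_compact rv [set (fun _ : X => 0 : K)].
Proof.
split; first by move=> _ ->; exact: zero_dual.
move=> F PF F0; exists (fun _ => 0) => // phis eps e0 hphis S FS.
have [g [Sg g0]] := filter_ex (filterI FS F0).
exists g; split => //; move=> phi _; rewrite -g0 subrr normr0 rv0 //.
Qed.

Lemma omega_set0 : omega rv (@set0 (X -> K)) = -oo%E.
Proof.
apply/eqP; rewrite eq_le leNye andbT.
have h0 : [set V : set (X -> K) | V !=set0 /\ weakly_compact rv V] [set (fun _ : X => 0 : K)].
  by split; [exists (fun _ => 0) | exact: wc_zero].
apply: le_trans (ereal_inf_lbound (ex_intro2 _ _ _ h0 erefl)) _.
by rewrite image_set0 ereal_sup0.
Qed.

End OmegaFacts.

Section Dir12.
Context (X : normedModType K) (W : set (X -> K)) (Wb : dual_bounded rv W)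
  (f0 : X -> K) (Wf0 : W f0).

Definition Iw := {f : X -> K | W f}.
Definition iw0 : Iw := exist _ f0 Wf0.
Local Notation Y := (@linf_ Iw iw0).

Lemma Iw_dual (i : Iw) : dual_elt (sval i).
Proof. by case: i => f Wf; exact: Wb.1. Qed.

Definition MW : R := sval (cid Wb.2).
Lemma MWP f : W f -> dnorm rv f <= MW.
Proof. exact: (svalP (cid Wb.2)). Qed.

Lemma Tbnd (x : X) : exists M : R, forall i : Iw, nv (sval i x) <= M.
Proof.
exists (MW * nv x) => i; apply: le_trans (dual_le _ (Iw_dual i)) _.
by apply: ler_wpM2r; [exact: nv_ge0 | case: i => f Wf; exact: MWP].
Qed.

Definition Tw (x : X) : Y := @Linf Iw iw0 (fun i : Iw => sval i x) (Tbnd x).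

Lemma Tw_lin : linear Tw.
Proof.
move=> a x y; apply: linf_eq; apply/funext => i /=.
by rewrite dual_linK //; exact: Iw_dual.
Qed.

HB.instance Definition _ := GRing.isLinear.Build K X Y *:%R Tw Tw_lin.

Lemma Tw_nv (x : X) : nv (Tw x) <= MW * nv x.
Proof.
rewrite linf_nvE; apply: lsup_le => i /=.
apply: le_trans (dual_le _ (Iw_dual i)) _.
by apply: ler_wpM2r; [exact: nv_ge0 | case: i => f Wf; exact: MWP].
Qed.

Lemma Tw_cont : continuous Tw.
Proof.
apply: (@lip_cont _ _ _ MW) => x y.
by rewrite -linearB; exact: Tw_nv.
Qed.

Definition evw (i : Iw) (g : Y) : K := lfun g i.

Lemma evw_ball i : dual_ball rv (evw i).
Proof.
have hle (g : Y) : rv `|evw i g| <= 1 * nv g.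
  by rewrite mul1r linf_nvE; exact: lsup_ub.
have de : dual_elt (evw i).
  split; first by move=> a x y.
  by apply: (@lip_cont _ _ _ 1) => g h; rewrite mul1r /nv -/(evw i (g - h)) -/(nv (g - h)) ; have := hle (g - h); rewrite mul1r.
by split => //; apply: dnorm_le => //.
Qed.

Lemma W_adj : W `<=` adj_ball rv Tw.
Proof.
move=> f Wf; exists (evw (exist _ f Wf)); first exact: evw_ball.
by apply/funext.
Qed.


Lemma dual_sum (f : X -> K) (y : nat -> X) n : dual_elt f ->
  f (\sum_(i < n) y i) = \sum_(i < n) f (y i).
Proof.
move=> df; elim: n => [|n IH]; first by rewrite !big_ord0 dual0.
by rewrite !big_ord_recr /= dualD // IH.
Qed.

Lemma eta_ge0 : (0 <= Defs.eta rv W)%E.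
Proof.
have w0 : wuc1 rv (fun _ : nat => (0 : X)).
  apply: ge_ereal_sup => _ [f [df _] <-].
  by rewrite eseries0 // => i _ _; rewrite dual0 // normr0 rv0.
apply: le_trans (ereal_sup_ubound (ex_intro2 _ _ _ w0 erefl)).
apply: limn_esup_ge => n.
apply: le_trans (ereal_sup_ubound (ex_intro2 _ _ f0 Wf0 erefl)).
by rewrite lee_fin; exact: rv_ge0.
Qed.

Lemma uc_le_eta : (uc rv Tw <= Defs.eta rv W)%E.
Proof.
apply: ge_ereal_sup => _ [x wx <-].
set S := fun n => \sum_(i < n.+1) Tw (x i).
apply: lee_real => r rlt.
have [r0|r0] := ltP r 0.
  by apply: le_trans eta_ge0; rewrite lee_fin ltW.
have blk m : exists p : nat * nat,
    [/\ (m <= p.1)%N, (p.1 < p.2)%N & r < nv (S p.2 - S p.1)].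
  have : (r%:E < ereal_sup [set (rv `|S kl.1 - S kl.2|)%:E
      | kl in [set kl : nat * nat | (m <= kl.1)%N /\ (m <= kl.2)%N]])%E.
    by apply: lt_le_trans rlt _; apply: ereal_inf_lbound; exists m.
  move/ereal_sup_gt => [_ [[k l] /= [mk ml] <-]]; rewrite lte_fin => hr.
  have [kl|kl|kl] := ltngtP k l.
  - by exists (k, l); split => //; rewrite nvB.
  - by exists (l, k).
  - by subst; move: hr; rewrite subrr normr0 rv0 => /(le_lt_trans r0); rewrite ltxx.
have [bl hbl] := choice blk.
pose st := fix st j := if j is j'.+1 then (bl (st j')).2 else 0%N.
pose a j := (bl (st j)).1.
pose b j := (bl (st j)).2.
have hst j : [/\ (st j <= a j)%N, (a j < b j)%N & r < nv (S (b j) - S (a j))].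
  exact: hbl (st j).
have stS j : st j.+1 = b j by [].
pose Sx n := \sum_(i < n.+1) x i.
pose u j := Sx (b j) - Sx (a j).
have Tu j : Tw (u j) = S (b j) - S (a j) by rewrite linearB !linear_sum.
have wu : wuc1 rv u.
  apply: ge_ereal_sup => _ [f [df f1] <-].
  have fx : (\sum_(0 <= n <oo) (rv `|f (x n)|)%:E <= 1)%E.
    by apply: le_trans wx; apply: ereal_sup_ubound; exists f.
  pose c i := rv `|f (x i)|.
  have c0 i : 0 <= c i by exact: rv_ge0.
  have Pmono m d : \sum_(i < m.+1) c i <= \sum_(i < (m + d).+1) c i.
    elim: d => [|d IH]; first by rewrite addn0.
    rewrite addnS [X in _ <= X]big_ord_recr /=; apply: le_trans IH _; rewrite lerDl; exact: c0.
  have Fdiff a0 d : rv `|\sum_(i < (a0 + d).+1) f (x i) - \sum_(i < a0.+1) f (x i)|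
      <= \sum_(i < (a0 + d).+1) c i - \sum_(i < a0.+1) c i.
    elim: d => [|d IH]; first by rewrite addn0 !subrr normr0 rv0.
    rewrite addnS big_ord_recr /= [X in _ <= X - _]big_ord_recr /=.
    rewrite addrAC [X in _ <= X]addrAC.
    apply: le_trans (nvD (_ : K) _) _; apply: lerD => //.
  have fu j : rv `|f (u j)| <= \sum_(i < (b j).+1) c i - \sum_(i < (a j).+1) c i.
    rewrite /u /Sx dualB // !dual_sum //.
    have [h1 h2 _] := hst j; rewrite -(subnKC (ltnW h2)); exact: Fdiff.
  have part J : \sum_(j < J) rv `|f (u j)| <= \sum_(i < (st J).+1) c i.
    elim: J => [|J IH]; first by rewrite big_ord0 sumr_ge0.
    rewrite big_ord_recr /= -/(b J).
    have [h1 h2 _] := hst J.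
    have := Pmono (st J) (a J - st J)%N; rewrite subnKC // => hP.
    have := lerD IH (fu J); lra.
  apply: le_trans fx.
  apply: lime_le; first by apply: is_cvg_nneseries => n _ _; rewrite lee_fin; exact: rv_ge0.
  apply: nearW => J.
  rewrite sumEFin big_mkord.
  apply: (@le_trans _ _ (\sum_(i < (st J).+1) c i)%:E); first by rewrite lee_fin; exact: part.
  rewrite -sumEFin -(big_mkord xpredT (fun i => (c i)%:E)).
  by apply: nneseries_lim_ge => n _ _; rewrite lee_fin.
apply: le_trans (ereal_sup_ubound (ex_intro2 _ _ u wu erefl)).
apply: limn_esup_ge => j.
have [_ _] := hst j; rewrite -Tu linf_nvE => /(sup_gt (lset_n0 _)) [_ [i _ <-] hi].
apply: le_trans (ereal_sup_ubound (ex_intro2 _ _ (sval i) (svalP i) erefl)).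
by rewrite lee_fin; exact: ltW.
Qed.

End Dir12.

Lemma dir12 (X : normedModType K) (C : R) : 0 < C ->
  (forall (Y : completeNormedModType K) (T : {linear X -> Y}), continuous T ->
     (omega_adj rv T <= C%:E * uc rv T)%E) ->
  forall W : set (X -> K), dual_bounded rv W -> (omega rv W <= C%:E * Defs.eta rv W)%E.
Proof.
move=> C0 h1 W Wb.
have [[f0 Wf0]|W0] := pselect (W !=set0); last first.
  have -> : W = set0 by apply/seteqP; split => // f Wf; apply: W0; exists f.
  by rewrite omega_set0 leNye.
apply: le_trans (omega_mono (W_adj Wb Wf0)) _.
have cT := @Tw_cont X W Wb f0 Wf0.
apply: le_trans (h1 _ (Tw Wb Wf0 : {linear _ -> _}) cT) _.
by apply: lee_wpmul2l; [rewrite lee_fin ltW | exact: uc_le_eta].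
Qed.

Lemma main_gen (X : completeNormedModType K) (C : R) : 0 < C -> prop3p4_equiv rv X C.
Proof.
move=> C0; split; first exact: dir12.
by move=> h Y T cT; exact: dir21.
Qed.

End Generic.

Lemma real_case (R : realType) (X : completeNormedModType R) (C : R) : 0 < C ->
      prop3p4_equiv (@id R) X C.
Proof.
apply: (@main_gen R R id (idfun : {rmorphism R -> R})) => //.
move=> F PF cF; exact: cauchy_cvg.
Qed.

Section Cx.
Local Open Scope complex_scope.
Context (R : realType).
Local Notation C := R[i].

Lemma sq_le (x y : R) : x ^+ 2 <= x ^+ 2 + y ^+ 2.
Proof. by rewrite lerDl sqr_ge0. Qed.

Lemma Re_le (u : C) : `|complex.Re u| <= complex.Re `|u|.
Proof.
rewrite normc_def /= -sqrtr_sqr; apply: ler_wsqrtr; exact: sq_le.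
Qed.

Lemma Im_le (u : C) : `|complex.Im u| <= complex.Re `|u|.
Proof.
rewrite normc_def /= -sqrtr_sqr; apply: ler_wsqrtr; rewrite addrC; exact: sq_le.
Qed.

Lemma normc_le (u : C) : complex.Re `|u| <= `|complex.Re u| + `|complex.Im u|.
Proof.
rewrite normc_def /=.
set a := complex.Re u; set b := complex.Im u.
have h : `|a| + `|b| = Num.sqrt ((`|a| + `|b|) ^+ 2) by rewrite sqrtr_sqr; apply/esym/ger0_norm; exact: addr_ge0.
rewrite [X in _ <= X]h; apply: ler_wsqrtr.
have ha : `|a| ^+ 2 = a ^+ 2 by rewrite -normrX ger0_norm // sqr_ge0.
have hb : `|b| ^+ 2 = b ^+ 2 by rewrite -normrX ger0_norm // sqr_ge0.
rewrite sqrrD ha hb -addrA lerD2l lerDr.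
by rewrite mulrn_wge0 // mulr_ge0.
Qed.

Lemma normC_real (u : C) : `|u| = (complex.Re `|u|)%:C.
Proof. by rewrite normc_def. Qed.

Lemma ReB (z w : C) : complex.Re (z - w) = complex.Re z - complex.Re w.
Proof. exact: (raddfB (@complex.Re R : Rcomplex R -> R)). Qed.
Lemma ImB (z w : C) : complex.Im (z - w) = complex.Im z - complex.Im w.
Proof. exact: (raddfB (@complex.Im R : Rcomplex R -> R)). Qed.

Lemma complex_complete (F : set_system (C : numFieldType)) : ProperFilter F -> cauchy F -> cvg F.
Proof.
move=> PF cF.
have cRe : cauchy ((@complex.Re R) @ F).
  apply: cauchy_exP => e e0.
  have e0' : 0 < (e%:C : C) by rewrite ltcR.
  have [z Fz] := cauchy_pick PF cF e0'.
  exists (complex.Re z); apply: (@filterS _ _ _ (ball z e%:C)) Fz => w.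
  rewrite -!ball_normE /ball_ /= normC_real ltcR => h.
  by apply: le_lt_trans h; rewrite -ReB; exact: Re_le.
have cIm : cauchy ((@complex.Im R) @ F).
  apply: cauchy_exP => e e0.
  have e0' : 0 < (e%:C : C) by rewrite ltcR.
  have [z Fz] := cauchy_pick PF cF e0'.
  exists (complex.Im z); apply: (@filterS _ _ _ (ball z e%:C)) Fz => w.
  rewrite -!ball_normE /ball_ /= normC_real ltcR => h.
  by apply: le_lt_trans h; rewrite -ImB; exact: Im_le.
have /cvg_ex [a Fa] : cvg ((@complex.Re R) @ F) by exact: cauchy_cvg.
have /cvg_ex [b Fb] : cvg ((@complex.Im R) @ F) by exact: cauchy_cvg.
apply/cvg_ex; exists (a +i* b); apply/cvgrPdist_lt => e e0.
have e'0 : 0 < complex.Re e / 2.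
  by rewrite divr_gt0 //; move: e0; rewrite ltcE => /andP[].
have := Fa; move=> /cvgrPdist_lt /(_ _ e'0) ha.
have := Fb; move=> /cvgrPdist_lt /(_ _ e'0) hb.
near=> z.
have ha' := near ha z; have hb' := near hb z.
rewrite normC_real.
have he : (complex.Re e)%:C = e by apply: RRe_real; exact: gtr0_real.
rewrite -he.
rewrite ltcR; apply: le_lt_trans (normc_le _) _.
rewrite ReB ImB /= [complex.Re e]splitr; apply: ltrD; [exact: ha' | exact: hb'].
Unshelve. all: by end_near.
Qed.


Lemma complex_case (X : completeNormedModType R[i]) (C0 : R) : 0 < C0 ->
  prop3p4_equiv (@complex.Re R) X C0.
Proof.
apply: (@main_gen R R[i] (@complex.Re R) (real_complex R)).
- by move=> r s; rewrite lecR.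
- by move=> r.
- by move=> k k0; apply: RRe_real; exact: ger0_real.
- exact: complex_complete.
Qed.
End Cx.


Theorem proposition3p4 (R : realType) :
  (forall (X : completeNormedModType R) (C : R), 0 < C ->
      prop3p4_equiv (@id R) X C) /\
  (forall (X : completeNormedModType R[i]) (C : R), 0 < C ->
      prop3p4_equiv (@complex.Re R) X C).
Proof.
split; [exact: real_case | exact: complex_case].
Qed.
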